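(* Let $mG^{(0)}$ be a finite canonical misinformation game and $\mathcal{T}$ the terminal set of the Adaptation Procedure on $mG^{(0)}$. Then: (i) $\mathcal{T}\subseteq\mathcal{AD}^\infty(\{mG^{(0)}\})$; (ii) for any $\sigma\in SME(mG^{(0)})$ there exists $mG\in\mathcal{T}$ such that $\sigma\in NME(mG)$.
   Context: A normal-form game is $G=\langle N,S,P\rangle$ with finite players $N$, finite pure strategy sets $S_i$, positions $S=\times_i S_i$, payoffs $P_i:S\to\mathbb{R}$. A misinformation game $mG=\langle G^0,G^1,\dots,G^{|N|}\rangle$ consists of the actual game $G^0$ and subjective games $G^i$; it is canonical if all $G^i=\langle N,S,P^i\rangle$ differ from $G^0$ only in payoffs and in every $G^i$ all players have equally many pure strategies. $NME(mG)$ is the set of profiles $\sigma=(\sigma_1,\dots,\sigma_{|N|})$ such that each $\sigma_i$ is player $i$'s component of some Nash equilibrium of $G^i$. $\chi(\sigma)=\mathrm{supp}(\sigma_1)\times\dots\times\mathrm{supp}(\sigma_{|N|})$. For $\vec v\in S$, $mG_{\vec v}$ is obtained by replacing, in every $P^i$ ($i\ge1$), the payoff vector at position $\vec v$ by $P^0(\vec v)$. For a set $M$ of misinformation games, $\mathcal{AD}(M)=\{mG_{\vec u}: mG\in M,\sigma\in NME(mG),\vec u\in\chi(\sigma)\}$, $\mathcal{AD}^{(0)}(M)=M$, $\mathcal{AD}^{(t+1)}(M)=\mathcal{AD}^{(t)}(\mathcal{AD}(M))$, $\mathcal{AD}^*(M)=\bigcup_{t\ge0}\mathcal{AD}^{(t)}(M)$;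 the length $\mathfrak{L}$ is the least $t\ge0$ with $\mathcal{AD}^{(t+1)}(M)=\mathcal{AD}^{(t)}(M)$ and $\mathcal{AD}^\infty(M)=\mathcal{AD}^{(\mathfrak{L})}(M)$. The terminal set is $\mathcal{T}=\{mG\in\mathcal{AD}^*(\{mG^{(0)}\}): mG\in\mathcal{AD}(\{mG\})\}$. A profile $\sigma$ is a stable misinformed equilibrium of $mG^{(0)}$ if there is $\widehat{mG}\in\mathcal{AD}^\infty(\{mG^{(0)}\})$ with $\sigma\in NME(\widehat{mG})$ and $\widehat{mG}_{\vec v}=\widehat{mG}$ for all $\vec v\in\chi(\sigma)$; $SME(mG^{(0)})$ is the set of these. *)

(* Defs.v *)
From HB Require Import structures.
From mathcomp Require Import all_boot all_order all_algebra.
Set Implicit Arguments. Unset Strict Implicit. Unset Printing Implicit Defensive.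
Import Order.TTheory GRing.Theory Num.Theory.
Local Open Scope ring_scope.

Section MG.
Variables (R : realFieldType) (n : nat) (m : 'I_n -> nat).

Definition pos := {dffun forall i : 'I_n, 'I_(m i)}.

Definition payoff := {ffun pos -> {ffun 'I_n -> R}}.

(* a canonical misinformation game: actual payoffs P^0 and subjective P^i,
   all over the same players and strategy sets *)
Record mgame := MGame { actual : payoff ; subj : {ffun 'I_n -> payoff} }.

Definition mixed (i : 'I_n) (x : {ffun 'I_(m i) -> R}) : Prop :=
  (forall k, 0 <= x k) /\ \sum_k x k = 1.

Definition profile := forall i : 'I_n, {ffun 'I_(m i) -> R}.

Definition is_profile (sg : profile) : Prop := forall i, mixed (sg i).

Definition exp_payoff (P : payoff) (sg : profile) (j : 'I_n) : R :=
  \sum_(s : pos) (\prod_(i : 'I_n) sg i (s i)) * P s j.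

Definition dev_payoff (P : payoff) (sg : profile) (j : 'I_n)
    (tau : {ffun 'I_(m j) -> R}) : R :=
  \sum_(s : pos) (tau (s j) * \prod_(i : 'I_n | i != j) sg i (s i)) * P s j.

Definition nash (P : payoff) (sg : profile) : Prop :=
  is_profile sg /\
  forall j (tau : {ffun 'I_(m j) -> R}), mixed tau ->
    @dev_payoff P sg j tau <= exp_payoff P sg j.

Definition NME (g : mgame) (sg : profile) : Prop :=
  forall i : 'I_n, exists tau : profile, nash (subj g i) tau /\ tau i = sg i.

Definition chi (sg : profile) (s : pos) : Prop := forall i, sg i (s i) != 0.

Definition adapt (g : mgame) (v : pos) : mgame :=
  MGame (actual g)
    [ffun i => [ffun s => if s == v then actual g v else subj g i s]].

Definition gset := mgame -> Prop.
Definition gset_eq (A B : gset) : Prop := forall g, A g <-> B g.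
Definition single (g0 : mgame) : gset := fun g => g = g0.

Definition AD (M : gset) : gset := fun g =>
  exists g1 sg u, M g1 /\ NME g1 sg /\ chi sg u /\ g = adapt g1 u.

Fixpoint ADiter (t : nat) (M : gset) : gset :=
  match t with
  | 0%N => M
  | t'.+1 => ADiter t' (AD M)
  end.

Definition ADstar (M : gset) : gset := fun g => exists t, ADiter t M g.

Definition is_length (M : gset) (L : nat) : Prop :=
  gset_eq (ADiter L.+1 M) (ADiter L M) /\
  forall t, (t < L)%N -> ~ gset_eq (ADiter t.+1 M) (ADiter t M).

Definition ADinf (M : gset) : gset := fun g =>
  exists L, is_length M L /\ ADiter L M g.

Definition terminal (g0 : mgame) : gset := fun g =>
  ADstar (single g0) g /\ AD (single g) g.

Definition SME (g0 : mgame) (sg : profile) : Prop :=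
  exists gh, ADinf (single g0) gh /\ NME gh sg /\
    forall v, chi sg v -> adapt gh v = gh.

End MG.

(* Main.v *)
Require Import Defs.
From mathcomp Require Import all_boot all_order all_algebra.
From Stdlib Require Import Classical.
From mathcomp Require Import zify.

Set Implicit Arguments. Unset Strict Implicit. Unset Printing Implicit Defensive.

Definition step (R : realFieldType) (n : nat) (m : 'I_n -> nat) (g h : mgame R m) : Prop :=
  exists sg u, NME g sg /\ chi sg u /\ h = adapt g u.

Fixpoint reach (R : realFieldType) (n : nat) (m : 'I_n -> nat) (k : nat) (g h : mgame R m) : Prop :=
  match k with
  | 0%N => g = h
  | k'.+1 => exists g', step g g' /\ reach k' g' h
  end.

Lemma ADiter_reach (R : realFieldType) (n : nat) (m : 'I_n -> nat) t (M : gset R m) h :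
  ADiter t M h <-> exists g, M g /\ reach t g h.
Proof.
elim: t M => [|t IH] M /=.
  by split=> [Mh|[g [Mg E]]]; [exists h | rewrite -E].
rewrite IH; split.
  move=> [g' [[g1 [sg [u [M1 [N1 [C1 E]]]]]] Rt]].
  by exists g1; split=> //; exists g'; split=> //; exists sg, u.
move=> [g [Mg [g' [[sg [u [N1 [C1 E]]]] Rt]]]].
by exists g'; split=> //; exists g, sg, u.
Qed.

Definition adset (R : realFieldType) (n : nat) (m : 'I_n -> nat) (g : mgame R m) : {set pos m} :=
  [set v | [forall i, subj g i v == actual g v]].

Lemma step_grow (R : realFieldType) (n : nat) (m : 'I_n -> nat) (g h : mgame R m) :
  step g h -> h = g \/ (#|adset g| < #|adset h|)%N.
Proof.
move=> [sg [u [_ [_ ->]]]].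
have sub : adset g \subset adset (adapt g u).
  apply/subsetP=> v; rewrite !inE => /forallP H; apply/forallP=> i /=.
  rewrite !ffunE; case: (v =P u) => [->|_]; [exact: eqxx | exact: H].
have uin : u \in adset (adapt g u).
  by rewrite inE; apply/forallP=> i /=; rewrite !ffunE eqxx.
case: (boolP (u \in adset g)) => Hu.
  left; case: g Hu {sub uin} => a s /=; rewrite inE => /forallP /= H.
  congr MGame; apply/ffunP=> i; rewrite ffunE; apply/ffunP=> s0; rewrite ffunE.
  by case: (s0 =P u) => [->|_] //; apply/esym/eqP; apply: H.
right; apply: proper_card; rewrite properE sub /=.
by apply/subsetPn; exists u.
Qed.

Lemma shrink (R : realFieldType) (n : nat) (m : 'I_n -> nat) k (g h : mgame R m) :
  reach k.+1 g h -> (#|adset g| + k.+1 <= #|adset h|)%N \/ reach k g h.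
Proof.
elim: k g => [|k IH] g /=.
  move=> [g' [St <-]]; case: (step_grow St) => [->|lt]; first by right.
  by left; rewrite addn1.
move=> [g' [St Rk]]; case: (step_grow St) => [E|lt].
  by right; rewrite -E.
case: (IH g' Rk) => [le|Rk'].
  by left; apply: leq_trans le; rewrite addnS -addSn leq_add2r.
by right; exists g'.
Qed.

Lemma grow (R : realFieldType) (n : nat) (m : 'I_n -> nat) k (g h : mgame R m) :
  reach k g h -> (#|adset g| + k <= #|adset h|)%N \/ reach k.+1 g h.
Proof.
elim: k g => [|k IH] g /=.
  by move=> ->; left; rewrite addn0.
move=> [g' [St Rk]]; case: (step_grow St) => [E|lt].
  by right; subst g'; exists g; split=> //; exists g.
case: (IH g' Rk) => [le|Rk'].
  by left; apply: leq_trans le; rewrite addnS -addSn leq_add2r.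
by right; exists g'.
Qed.

Lemma stab_big (R : realFieldType) (n : nat) (m : 'I_n -> nat) (M : gset R m) k :
  (#|pos m| < k)%N -> gset_eq (ADiter k.+1 M) (ADiter k M).
Proof.
move=> Hk h; rewrite !ADiter_reach; split.
  move=> [g [Mg Rg]]; exists g; split=> //.
  case: (shrink Rg) => // le; exfalso.
  have H2 : (#|adset h| <= #|pos m|)%N := max_card _; lia.
move=> [g [Mg Rg]]; exists g; split=> //.
case: (grow Rg) => // le; exfalso.
have H2 : (#|adset h| <= #|pos m|)%N := max_card _; lia.
Qed.

Lemma least_ex (P : nat -> Prop) N : P N -> exists L, P L /\ forall t, (t < L)%N -> ~ P t.
Proof.
elim: N {-2}N (leqnn N) => [|B IH] N HN PN.
  by exists N; split=> // t Ht; exfalso; lia.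
case: (classic (exists t, (t < N)%N /\ P t)) => [[t [Ht Pt]]|Hno].
  by apply: (IH t) => //; rewrite -ltnS (leq_trans Ht HN).
exists N; split=> // t Ht Pt; apply: Hno; by exists t.
Qed.

Lemma ADiter_S (R : realFieldType) (n : nat) (m : 'I_n -> nat) t (M : gset R m) h :
  ADiter t.+1 M h <-> AD (ADiter t M) h.
Proof. elim: t M => [|t IH] M; first by split. exact: IH. Qed.

Lemma AD_ext (R : realFieldType) (n : nat) (m : 'I_n -> nat) (A B : gset R m) :
  gset_eq A B -> gset_eq (AD A) (AD B).
Proof.
move=> E h; split=> [[g1 [sg [u [H1 H2]]]]|[g1 [sg [u [H1 H2]]]]];
  exists g1, sg, u; split=> //; by apply/E.
Qed.

Lemma stab_all (R : realFieldType) (n : nat) (m : 'I_n -> nat) (M : gset R m) L j :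
  gset_eq (ADiter L.+1 M) (ADiter L M) -> gset_eq (ADiter (L + j) M) (ADiter L M).
Proof.
move=> E; elim: j => [|j IH] h; first by rewrite addn0.
rewrite addnS ADiter_S; split=> H.
  by apply/E/ADiter_S; apply/(AD_ext IH).
by apply/(AD_ext IH)/ADiter_S/E.
Qed.

Lemma loop_all (R : realFieldType) (n : nat) (m : 'I_n -> nat) (M : gset R m) t g j :
  ADiter t M g -> AD (single g) g -> ADiter (t + j) M g.
Proof.
move=> H [g1 [sg [u [E1 [N1 [C1 E]]]]]]; rewrite /single in E1; subst g1.
elim: j => [|j IH]; first by rewrite addn0.
by rewrite addnS; apply/ADiter_S; exists g, sg, u.
Qed.

Lemma length_ex (R : realFieldType) (n : nat) (m : 'I_n -> nat) (M : gset R m) :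
  exists L, is_length M L.
Proof.
have [L [H1 H2]] := least_ex (P := fun t => gset_eq (ADiter t.+1 M) (ADiter t M))
   (stab_big M (ltnSn #|pos m|)).
by exists L; split.
Qed.

Theorem proposition11 (R : realFieldType) (n : nat) (m : 'I_n -> nat)
    (g0 : mgame R m) :
  (forall g, terminal g0 g -> ADinf (single g0) g) /\
  (forall sg, SME g0 sg -> exists g, terminal g0 g /\ NME g sg).
Proof.
split.
  move=> g [[t Ht] Hl].
  have [L [HL1 HL2]] := length_ex (single g0).
  exists L; split; first by split.
  case: (leqP t L) => [le|lt].
    have := @loop_all R n m (single g0) t g (L - t) Ht Hl.
    by rewrite (subnKC le).
  have := (@stab_all R n m (single g0) L (t - L) HL1 g).1.
  rewrite (subnKC (ltnW lt)); by apply.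
move=> sg [gh [Hinf [HN Hfix]]].
exists gh; split=> //; split.
  by case: Hinf => L [_ HL]; exists L.
have Hex : forall i, exists k, sg i k != 0%R.
  move=> i; have [tau [[Hp _] Ei]] := HN i.
  have [_ S1] := Hp i; rewrite Ei in S1.
  apply: NNPP => Hno.
  have : (\sum_k sg i k = 0)%R.
    apply: big1 => k _; apply/eqP; apply: NNPP => Hk; apply: Hno; exists k.
    by apply/negP.
  by rewrite S1 => /eqP; rewrite GRing.oner_eq0.
pose u : pos m := finfun (fun i => xchoose (Hex i)).
have Cu : chi sg u by move=> i; rewrite /u ffunE; exact: (xchooseP (Hex i)).
by exists gh, sg, u; split=> //; split=> //; split=> //; rewrite Hfix.
Qed.
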